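(* Let $\ket{\varphi_0}=\xi_0\ket{00}+\xi_1\ket{01}+\xi_2\ket{10}+\xi_3\ket{11}$ be a 2-qubit state (unit vector in $\mathbb{C}^4$) and let $A=\begin{pmatrix}\xi_0&\xi_1\\\xi_2&\xi_3\end{pmatrix}$. (1) If $\det A=0$, let $(v_1,v_2)\neq(0,0)$ be a vector such that both columns of $A$ are multiples of $(v_1,v_2)$, let $K_1=U(\bar v_1,\bar v_2)$; then $(K_1\otimes I)\ket{\varphi_0}=\eta_0\ket{00}+\eta_1\ket{01}$ for some $\eta_0,\eta_1\in\mathbb{C}$, and with $K_2=U(\bar\eta_0,-\eta_1)^T$ we have $(K_1\otimes K_2)\ket{\varphi_0}=\ket{00}$. (2) If $\det A\neq 0$, let $W_1=R_1(A)^T$. Then $\det$ of the matrix associated to the state $cz\,(I\otimes W_1)\ket{\varphi_0}$ is zero, and if $K_1,K_2$ are the matrices constructed as in part (1) from the state $cz\,(I\otimes W_1)\ket{\varphi_0}$ in place of $\ket{\varphi_0}$, then $(K_1\otimes K_2)\,cz\,(I\otimes W_1)\ket{\varphi_0}=\ket{00}$.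
   Context: For complex $(x,y)\neq(0,0)$, $U(x,y)=\frac{1}{\sqrt{|x|^2+|y|^2}}\begin{pmatrix}x&y\\-\bar y&\bar x\end{pmatrix}$. The matrix associated to a 2-qubit state $t_{00}\ket{00}+t_{01}\ket{01}+t_{10}\ket{10}+t_{11}\ket{11}$ is $\begin{pmatrix}t_{00}&t_{01}\\t_{10}&t_{11}\end{pmatrix}$. $cz=\mathrm{diag}(1,1,1,-1)$ in the basis $\ket{00},\ket{01},\ket{10},\ket{11}$, and $I$ is the $2\times2$ identity. For a nonsingular $A=\begin{pmatrix}a&b\\c&d\end{pmatrix}$, $R_1(A)=U(x,y)$ with $x=d-bk$, $y=\bar c-\bar a\bar k$, where, setting $\beta=a\bar c+b\bar d$, $k=\sqrt{(|c|^2+|d|^2)/(|a|^2+|b|^2)}$ if $\beta=0$ and $k=-\sqrt{(|c|^2+|d|^2)/(|\beta|^2(|a|^2+|b|^2))}\,\bar\beta$ if $\beta\neq0$. $M^T$ denotes the transpose of $M$. *)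

(* Defs.v *)
(* Complex numbers: an arbitrary numClosedFieldType C
   (this includes R[i] for any real closed / real field R, in particular C = ℂ). *)
From HB Require Import structures.
From mathcomp Require Import all_boot all_order all_algebra.
From mathcomp Require Import mxtens.
Set Implicit Arguments. Unset Strict Implicit. Unset Printing Implicit Defensive.
Import Order.TTheory GRing.Theory Num.Theory.
Local Open Scope ring_scope.

Section Defs.
Variable C : numClosedFieldType.

(* Basis index of |a b>, a = first qubit (most significant), b = second qubit.
   mxtens_index (a,b) = 2*a + b, consistent with the Kronecker product tensmx. *)
Definition bidx (a b : 'I_2) : 'I_(2 * 2) := mxtens_index (a, b).

Definition q0 : 'I_2 := ord0.
Definition q1 : 'I_2 := ord_max.

Definition ket00 : 'cV[C]_(2 * 2) := delta_mx (bidx q0 q0) 0.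
Definition ket01 : 'cV[C]_(2 * 2) := delta_mx (bidx q0 q1) 0.

Definition unit_state (phi : 'cV[C]_(2 * 2)) : Prop :=
  \sum_(k < 2 * 2) `|phi k 0| ^+ 2 = 1.

Definition state_mat (phi : 'cV[C]_(2 * 2)) : 'M[C]_2 :=
  \matrix_(a < 2, b < 2) phi (bidx a b) 0.

Definition Umat (x y : C) : 'M[C]_2 :=
  (sqrtC (`|x| ^+ 2 + `|y| ^+ 2))^-1 *:
  \matrix_(i < 2, j < 2)
     (if i == q0 then (if j == q0 then x else y)
      else (if j == q0 then - y^* else x^*)).

Definition R1 (A : 'M[C]_2) : 'M[C]_2 :=
  let a := A q0 q0 in let b := A q0 q1 in
  let c := A q1 q0 in let d := A q1 q1 in
  let beta := a * c^* + b * d^* in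
  let k := if beta == 0
           then sqrtC ((`|c| ^+ 2 + `|d| ^+ 2) / (`|a| ^+ 2 + `|b| ^+ 2))
           else - sqrtC ((`|c| ^+ 2 + `|d| ^+ 2) /
                          (`|beta| ^+ 2 * (`|a| ^+ 2 + `|b| ^+ 2))) * beta^* in
  Umat (d - b * k) (c^* - a^* * k^*).

Definition cz : 'M[C]_(2 * 2) :=
  diag_mx (\row_(k < 2 * 2) (if k == bidx q1 q1 then -1 else 1)).

Definition cols_multiple (A : 'M[C]_2) (v1 v2 : C) : Prop :=
  forall j : 'I_2, exists s : C, A q0 j = s * v1 /\ A q1 j = s * v2.

Definition part1_conclusion (phi : 'cV[C]_(2 * 2)) : Prop :=
  forall v1 v2 : C, (v1, v2) != (0, 0) -> cols_multiple (state_mat phi) v1 v2 ->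
  let K1 := Umat v1^* v2^* in
  (exists eta0 eta1 : C,
      (K1 *t (1%:M : 'M[C]_2)) *m phi = eta0 *: ket00 + eta1 *: ket01) /\
  (forall eta0 eta1 : C,
      (K1 *t (1%:M : 'M[C]_2)) *m phi = eta0 *: ket00 + eta1 *: ket01 ->
      let K2 := (Umat eta0^* (- eta1))^T in
      (K1 *t K2) *m phi = ket00).

End Defs.

Arguments cz {C}.
Arguments ket00 {C}.
Arguments ket01 {C}.

(* Main.v *)
Require Import Defs.
From HB Require Import structures.
From mathcomp Require Import all_boot all_order all_algebra.
From mathcomp Require Import mxtens ring.
Import Order.TTheory GRing.Theory Num.Theory.
Local Open Scope ring_scope.

Section S.
Variable C : numClosedFieldType.

Lemma sum2 (F : 'I_2 -> C) : \sum_(i < 2) F i = F q0 + F q1.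
Proof. rewrite big_ord_recl big_ord1; congr (_ + F _); exact: val_inj. Qed.

Lemma det22 (M : 'M[C]_2) : \det M = M q0 q0 * M q1 q1 - M q0 q1 * M q1 q0.
Proof.
rewrite (expand_det_row _ ord0) sum2 /cofactor !det_mx11 /= !mxE /=.
have l1 : lift ord0 (0:'I_1) = q1 by apply: val_inj.
have l2 : lift q0 (0:'I_1) = q1 by apply: val_inj.
have l3 : lift q1 (0:'I_1) = q0 by apply: val_inj.
rewrite l1 l3 /= expr0 expr1; ring.
Qed.

Lemma sum4 (F : 'I_(2*2) -> C) :
  \sum_(k < 2 * 2) F k = \sum_(i < 2) \sum_(j < 2) F (bidx i j).
Proof.
rewrite pair_big /=.
apply: (reindex (fun ij : 'I_2 * 'I_2 => bidx ij.1 ij.2)) => /=.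
exists (@mxtens_unindex 2 2) => [[i j] _|k _]; rewrite /bidx.
  by rewrite mxtens_indexK.
by rewrite -surjective_pairing mxtens_unindexK.
Qed.

Lemma state_tens (K L : 'M[C]_2) (phi : 'cV[C]_(2*2)) :
  state_mat ((K *t L) *m phi) = K *m state_mat phi *m L^T.
Proof.
apply/matrixP => a b; rewrite mxE [in LHS]mxE sum4.
rewrite [in RHS]mxE.
under [in RHS]eq_bigr do rewrite !mxE big_distrl /=.
rewrite [in RHS]exchange_big /=.
apply: eq_bigr => i _; apply: eq_bigr => j _.
by rewrite /bidx tensmxE !mxE; ring.
Qed.

Lemma I2cases (i : 'I_2) : i = q0 \/ i = q1.
Proof. by case: i => [[|[|]]] // H; [left|right]; apply: val_inj. Qed.

Lemma eq22 (M N : 'M[C]_2) :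
  M q0 q0 = N q0 q0 -> M q0 q1 = N q0 q1 -> M q1 q0 = N q1 q0 ->
  M q1 q1 = N q1 q1 -> M = N.
Proof.
move=> h1 h2 h3 h4; apply/matrixP => i j.
by case: (I2cases i) => ->; case: (I2cases j) => ->.
Qed.

Lemma mul22E (M N : 'M[C]_2) i j :
  (M *m N) i j = M i q0 * N q0 j + M i q1 * N q1 j.
Proof. by rewrite mxE sum2. Qed.

Lemma bidx_inj : injective (fun ij : 'I_2 * 'I_2 => bidx ij.1 ij.2).
Proof.
move=> [i j] [k l] /= h.
have := congr1 (@mxtens_unindex 2 2) h; rewrite /bidx !mxtens_indexK.
by [].
Qed.

Lemma state_inj (p q : 'cV[C]_(2*2)) : state_mat p = state_mat q -> p = q.
Proof.
move=> h; apply/matrixP => k j; rewrite [j]ord1.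
case: (mxtens_indexP k) => a b.
by have := congr1 (fun M : 'M[C]_2 => M a b) h; rewrite !mxE.
Qed.

Lemma state_lin (a b : C) (p q : 'cV[C]_(2*2)) :
  state_mat (a *: p + b *: q) = a *: state_mat p + b *: state_mat q.
Proof. by apply/matrixP => i j; rewrite !mxE. Qed.

Lemma bidx_eq i j k l : (bidx i j == bidx k l) = ((i == k) && (j == l)).
Proof.
apply/eqP/andP => [h|[/eqP -> /eqP ->]] //.
by have := @bidx_inj (i, j) (k, l) h; case => -> ->.
Qed.

Lemma state_ket00 i j : state_mat (@ket00 C) i j = ((i == q0) && (j == q0))%:R.
Proof. by rewrite !mxE bidx_eq eqxx andbT. Qed.

Lemma state_ket01 i j : state_mat (@ket01 C) i j = ((i == q0) && (j == q1))%:R.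
Proof. by rewrite !mxE bidx_eq eqxx andbT. Qed.

Lemma state_cz (p : 'cV[C]_(2*2)) i j :
  state_mat (cz *m p) i j =
  (if (i == q1) && (j == q1) then -1 else 1) * state_mat p i j.
Proof. by rewrite /cz mul_diag_mx !mxE bidx_eq. Qed.

Lemma unit_stateE (p : 'cV[C]_(2*2)) : unit_state p ->
  `|state_mat p q0 q0| ^+ 2 + `|state_mat p q0 q1| ^+ 2 +
  `|state_mat p q1 q0| ^+ 2 + `|state_mat p q1 q1| ^+ 2 = 1.
Proof.
rewrite /unit_state sum4 !sum2 !mxE => <-; ring.
Qed.

Lemma Umat00 (x y : C) : Umat x y q0 q0 = (sqrtC (`|x| ^+ 2 + `|y| ^+ 2))^-1 * x.
Proof. by rewrite !mxE. Qed.
Lemma Umat01 (x y : C) : Umat x y q0 q1 = (sqrtC (`|x| ^+ 2 + `|y| ^+ 2))^-1 * y.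
Proof. by rewrite !mxE. Qed.
Lemma Umat10 (x y : C) : Umat x y q1 q0 = (sqrtC (`|x| ^+ 2 + `|y| ^+ 2))^-1 * - y^*.
Proof. by rewrite !mxE. Qed.
Lemma Umat11 (x y : C) : Umat x y q1 q1 = (sqrtC (`|x| ^+ 2 + `|y| ^+ 2))^-1 * x^*.
Proof. by rewrite !mxE. Qed.


Lemma rfacts (x y : C) : (x, y) != (0, 0) ->
  let r := sqrtC (`|x| ^+ 2 + `|y| ^+ 2) in
  [/\ r != 0, r ^+ 2 = x * x^* + y * y^* & r^* = r].
Proof.
move=> nz r.
have ge : 0 <= `|x| ^+ 2 + `|y| ^+ 2 by rewrite addr_ge0 // exprn_ge0.
split; last by rewrite geC0_conj // sqrtC_ge0.
  rewrite sqrtC_eq0 paddr_eq0 ?exprn_ge0 // !expf_eq0 /= !normr_eq0.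
  by apply: contra nz => /andP[/eqP -> /eqP ->].
by rewrite sqrtCK !normCK.
Qed.

Lemma part1_gen (phi : 'cV[C]_(2*2)) : unit_state phi -> part1_conclusion phi.
Proof.
move=> /unit_stateE Hu v1 v2 Hv Hcol K1.
set A := state_mat phi.
have [s0 [h00 h10]] := Hcol q0.
have [s1 [h01 h11]] := Hcol q1.
rewrite -/A in h00 h10 h01 h11 Hu.
have Hv' : (v1^*, v2^*) != (0, 0).
  by apply: contra Hv; rewrite !xpair_eqE !conjC_eq0.
have [Hn0 Hn2 Hnr] := rfacts _ _ Hv'.
set n := sqrtC _ in Hn0 Hn2 Hnr.
rewrite !conjCK in Hn2.
have HS : state_mat ((K1 *t (1%:M : 'M[C]_2)) *m phi) = K1 *m A.
  by rewrite state_tens trmx1 mulmx1.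
have K00 : K1 q0 q0 = n^-1 * v1^* by rewrite /K1 Umat00.
have K01 : K1 q0 q1 = n^-1 * v2^* by rewrite /K1 Umat01.
have K10 : K1 q1 q0 = n^-1 * - v2 by rewrite /K1 Umat10 conjCK.
have K11 : K1 q1 q1 = n^-1 * v1 by rewrite /K1 Umat11 conjCK.
have E0 : (K1 *m A) q0 q0 = n * s0.
  rewrite mul22E K00 K01 h00 h10.
  transitivity (n^-1 * (s0 * (v1^* * v1 + v2^* * v2))); first by ring.
  by rewrite -Hn2; field.
have E1 : (K1 *m A) q0 q1 = n * s1.
  rewrite mul22E K00 K01 h01 h11.
  transitivity (n^-1 * (s1 * (v1^* * v1 + v2^* * v2))); first by ring.
  by rewrite -Hn2; field.
have E2 : (K1 *m A) q1 q0 = 0 by rewrite mul22E K10 K11 h00 h10; ring.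
have E3 : (K1 *m A) q1 q1 = 0 by rewrite mul22E K10 K11 h01 h11; ring.
split.
  exists (n * s0), (n * s1); apply: state_inj; rewrite HS state_lin.
  by apply: eq22; rewrite ?E0 ?E1 ?E2 ?E3 !mxE ?bidx_eq /=; ring.
move=> eta0 eta1 H K2.
have H' := congr1 (@state_mat C) H.
rewrite HS state_lin in H'.
have Hx0 : eta0 = n * s0.
  by rewrite -E0 H' !mxE ?bidx_eq /=; ring.
have Hx1 : eta1 = n * s1.
  by rewrite -E1 H' !mxE ?bidx_eq /=; ring.
have Hm : eta0 * eta0^* + eta1 * eta1^* = 1.
  rewrite Hx0 Hx1 !rmorphM /= Hnr -Hu h00 h10 h01 h11 !normCK !rmorphM /=.
  transitivity (n ^+ 2 * (s0 * s0^* + s1 * s1^*)); first by ring.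
  rewrite Hn2; ring.
have Hm' : sqrtC (`|eta0^*| ^+ 2 + `|- eta1| ^+ 2) = 1.
  have -> : `|eta0^*| ^+ 2 + `|- eta1| ^+ 2 = 1.
    by rewrite !normCK conjCK rmorphN /= -Hm; ring.
  exact: sqrtC1.
apply: state_inj; rewrite state_tens /K2 trmxK H'.
apply: eq22; rewrite !mul22E ?Umat00 ?Umat01 ?Umat10 ?Umat11 Hm' invr1
   !mxE ?bidx_eq /= ?rmorphN ?opprK ?conjCK /=.
- by rewrite -[RHS]Hm; ring.
- ring.
- ring.
- ring.
Qed.


Lemma R1_spec (A : 'M[C]_2) :
  let a := A q0 q0 in let b := A q0 q1 in let c := A q1 q0 in let d := A q1 q1 in
  a * a^* + b * b^* != 0 ->
  exists k, R1 A = Umat (d - b * k) (c^* - a^* * k^*) /\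
   c * c^* + d * d^* - k^* * (a^* * c + b^* * d) + k * (a * c^* + b * d^*)
   - k * k^* * (a * a^* + b * b^*) = 0.
Proof.
move=> a b c d Hab.
rewrite /R1 -/a -/b -/c -/d.
case: ifP => Hb.
  set q := (_ / _).
  have qge : 0 <= q by rewrite divr_ge0 // addr_ge0 // exprn_ge0.
  exists (sqrtC q); split => //.
  have kr : (sqrtC q)^* = sqrtC q by rewrite geC0_conj // sqrtC_ge0.
  have kk : sqrtC q * sqrtC q = q by rewrite -expr2 sqrtCK.
  move/eqP: Hb => Hb.
  have Hb' : a^* * c + b^* * d = 0.
    have := congr1 (@Num.conj_op C) Hb.
    by rewrite rmorphD !rmorphM /= !conjCK rmorph0.
  rewrite Hb Hb' kr kk /q !normCK.
  by field.
set beta := a * c^* + b * d^*.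
set q := (_ / _).
have qge : 0 <= q.
  by rewrite divr_ge0 // ?mulr_ge0 // ?addr_ge0 // exprn_ge0.
set t := sqrtC q.
exists (- t * beta^*); split => //.
have tr : t^* = t by rewrite geC0_conj // sqrtC_ge0.
have tt : t * t = q by rewrite -expr2 sqrtCK.
have Hbeta : beta != 0 by rewrite Hb.
rewrite !rmorphM rmorphN /= tr conjCK.
have -> : a^* * c + b^* * d = beta^* by rewrite /beta rmorphD !rmorphM /= !conjCK; ring.
transitivity (c * c^* + d * d^* - (t * t) * (beta * beta^*) * (a * a^* + b * b^*)).
  by rewrite -/beta; ring.
rewrite tt /q !normCK -/beta.
field.
by rewrite Hab conjC_eq0 Hbeta.
Qed.



Lemma rowU (p q x y r : C) : r != 0 -> r ^+ 2 = x * x^* + y * y^* -> r^* = r ->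
  `|p * (r^-1 * x) + q * (r^-1 * - y^*)| ^+ 2 +
  `|p * (r^-1 * y) + q * (r^-1 * x^*)| ^+ 2 = `|p| ^+ 2 + `|q| ^+ 2.
Proof.
move=> r0 r2 rr.
rewrite !normCK !rmorphD !rmorphM !rmorphN /= fmorphV /= rr !conjCK.
transitivity ((r^-1) ^+ 2 * (r ^+ 2) * (p * p^* + q * q^*)).
  by rewrite r2; ring.
by field.
Qed.

End S.

Theorem mainTheorem4 (C : numClosedFieldType) (phi0 : 'cV[C]_(2 * 2)) :
  unit_state phi0 ->
  (\det (state_mat phi0) = 0 -> part1_conclusion phi0) /\
  (\det (state_mat phi0) != 0 ->
     let W1 := (R1 (state_mat phi0))^T in
     let psi := cz *m ((1%:M : 'M[C]_2) *t W1) *m phi0 in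
     \det (state_mat psi) = 0 /\ part1_conclusion psi).
Proof.
move=> Hu; split; first by move=> _; exact: part1_gen.
move=> Hdet W1 psi.
set A := state_mat phi0.
rewrite -/A in Hdet.
have HuA := unit_stateE _ _ Hu; rewrite -/A in HuA.
set a := A q0 q0 in HuA; set b := A q0 q1 in HuA;
set c := A q1 q0 in HuA; set d := A q1 q1 in HuA.
have HD : \det A = a * d - b * c by rewrite det22.
have Hab : a * a^* + b * b^* != 0.
  apply: contra Hdet.
  rewrite paddr_eq0 ?mul_conjC_ge0 // !mul_conjC_eq0 => /andP[/eqP a0 /eqP b0].
  by rewrite HD a0 b0 !mul0r subrr.
have [k [HR HZ]] := R1_spec _ _ Hab.
rewrite -/a -/b -/c -/d in HR HZ.
set x := d - b * k in HR.
set y := c^* - a^* * k^* in HR.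
have Hxy : (x, y) != (0, 0).
  apply: contra Hdet; rewrite xpair_eqE => /andP[/eqP x0 /eqP y0].
  have dE : d = b * k by apply/eqP; rewrite -subr_eq0 -x0.
  have cE : c = a * k.
    have := congr1 (@Num.conj_op C) y0.
    rewrite rmorphB rmorphM /= !conjCK rmorph0 => /eqP; rewrite subr_eq0 => /eqP //.
  by rewrite HD dE cE; apply/eqP; ring.
have [r0 r2 rr] := rfacts _ _ _ Hxy.
set r := sqrtC _ in r0 r2 rr.
have HP : forall i j, state_mat psi i j =
   (if (i == q1) && (j == q1) then -1 else 1) * (A *m Umat x y) i j.
  move=> i j; rewrite /psi -mulmxA state_cz state_tens mul1mx /W1 trmxK -/A HR.
  by [].
have U00 : Umat x y q0 q0 = r^-1 * x by rewrite Umat00.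
have U01 : Umat x y q0 q1 = r^-1 * y by rewrite Umat01.
have U10 : Umat x y q1 q0 = r^-1 * - y^* by rewrite Umat10.
have U11 : Umat x y q1 q1 = r^-1 * x^* by rewrite Umat11.
split.
  rewrite det22 !HP /= !mul22E U00 U01 U10 U11 -/a -/b -/c -/d.
  rewrite /x /y !rmorphB !rmorphM /= !conjCK.
  transitivity (- (r^-1) ^+ 2 * (a * d - b * c) *
    (c * c^* + d * d^* - k^* * (a^* * c + b^* * d) + k * (a * c^* + b * d^*)
   - k * k^* * (a * a^* + b * b^*))).
    by ring.
  by rewrite HZ mulr0.
apply: part1_gen.
rewrite /unit_state sum4 !sum2.
rewrite -[X in _ = X]HuA.
have HP' : forall i j, psi (bidx i j) 0 = state_mat psi i j.
  by move=> i j; rewrite [RHS]mxE.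
rewrite !HP' !HP /= !mul22E U00 U01 U10 U11 -/a -/b -/c -/d.
rewrite mulN1r normrN !mul1r.
rewrite (rowU _ a b _ _ _ r0 r2 rr) (rowU _ c d _ _ _ r0 r2 rr); ring.
Qed.
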